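(* Let $X$ be an infinite dimensional real Banach space. Then $dens(X)\leq 2^{biort(X)}$.
   Context: $dens(X)$ is the least cardinality of a norm-dense subset of $X$. A biorthogonal system in $X$ is a family $(x_i,x_i^* )_{i\in I}\subseteq X\times X^*$ with $x_i^*(x_i)=1$ for all $i$ and $x_i^*(x_j)=0$ for $i\neq j$. $biort(X)$ is the supremum of $|I|$ over all biorthogonal systems $(x_i,x_i^* )_{i\in I}$ in $X$. *)

(* Defs.v *)
From Stdlib Require Import Reals List.
Open Scope R_scope.

Record BanachSpace := {
  carrier :> Type;
  vzero : carrier;
  vadd : carrier -> carrier -> carrier;
  vopp : carrier -> carrier;
  vscale : R -> carrier -> carrier;
  vnorm : carrier -> R;
  vadd_assoc : forall x y z, vadd x (vadd y z) = vadd (vadd x y) z;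
  vadd_comm : forall x y, vadd x y = vadd y x;
  vadd_zero : forall x, vadd x vzero = x;
  vadd_opp : forall x, vadd x (vopp x) = vzero;
  vscale_one : forall x, vscale 1 x = x;
  vscale_assoc : forall a b x, vscale a (vscale b x) = vscale (a * b) x;
  vscale_addv : forall a x y, vscale a (vadd x y) = vadd (vscale a x) (vscale a y);
  vscale_adds : forall a b x, vscale (a + b) x = vadd (vscale a x) (vscale b x);
  vnorm_nonneg : forall x, 0 <= vnorm x;
  vnorm_eq0 : forall x, vnorm x = 0 -> x = vzero;
  vnorm_scale : forall a x, vnorm (vscale a x) = Rabs a * vnorm x;
  vnorm_triangle : forall x y, vnorm (vadd x y) <= vnorm x + vnorm y;
  vcomplete : forall u : nat -> carrier,
    (forall eps, eps > 0 -> exists N, forall n m, (n >= N)%nat -> (m >= N)%nat ->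
        vnorm (vadd (u n) (vopp (u m))) < eps) ->
    exists l, forall eps, eps > 0 -> exists N, forall n, (n >= N)%nat ->
        vnorm (vadd (u n) (vopp l)) < eps
}.

Definition vsub {X : BanachSpace} (x y : X) : X := vadd X x (vopp X y).

Fixpoint lincomb {X : BanachSpace} (l : list (R * X)) : X :=
  match l with
  | nil => vzero X
  | (a, v) :: t => vadd X (vscale X a v) (lincomb t)
  end.

Definition in_span {X : BanachSpace} (l : list X) (x : X) : Prop :=
  exists c : list R, length c = length l /\ x = lincomb (combine c l).

Definition infinite_dimensional (X : BanachSpace) : Prop :=
  forall l : list X, exists x : X, ~ in_span l x.

Definition is_dual_elem {X : BanachSpace} (f : X -> R) : Prop :=
  (forall x y, f (vadd X x y) = f x + f y) /\
  (forall a x, f (vscale X a x) = a * f x) /\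
  (exists C, forall x, Rabs (f x) <= C * vnorm X x).

Definition biorthogonal {X : BanachSpace} {I : Type}
  (x : I -> X) (xs : I -> (X -> R)) : Prop :=
  (forall i, is_dual_elem (xs i)) /\
  (forall i, xs i (x i) = 1) /\
  (forall i j, i <> j -> xs i (x j) = 0).

Definition dense {X : BanachSpace} (D : X -> Prop) : Prop :=
  forall x eps, eps > 0 -> exists d, D d /\ vnorm X (vsub x d) < eps.

Definition card_le (A B : Type) : Prop := exists f : A -> B, forall a b, f a = f b -> a = b.

(* K bounds biort(X): every biorthogonal system has |I| <= |K|. *)
Definition biort_bound (X : BanachSpace) (K : Type) : Prop :=
  forall (I : Type) (x : I -> X) (xs : I -> (X -> R)), biorthogonal x xs -> card_le I K.

(* Main.v *)
Require Import Defs.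
From Stdlib Require Import Reals List Lra Lia.
From Stdlib Require Import Classical ClassicalEpsilon FunctionalExtensionality ProofIrrelevance.
Open Scope R_scope.

Module ZW.
From mathcomp Require Import ssreflect ssrbool boolp classical_sets.
Lemma zorn_pre (T:Type) (t0:T) (R : T -> T -> Prop) :
  (forall t, R t t) -> (forall r s t, R r s -> R s t -> R r t) ->
  (forall A : T -> Prop, (forall s t, A s -> A t -> R s t \/ R t s) -> exists t, forall s, A s -> R s t) ->
  exists t, forall s, R t s -> R s t.
Proof.
move=> Rr Rt Rc.
have H1 : forall x, `[< R x x >] by move=> x; apply/asboolP.
have H2 : forall r s u, `[< R r s >] -> `[< R s u >] -> `[< R r u >].
  by move=> r s u /asboolP h1 /asboolP h2; apply/asboolP; exact: Rt h2.
have H3 : forall A, total_on A (fun a b => `[< R a b >]) -> exists t, forall s, A s -> `[< R s t >].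
  move=> A HA; have [|t Ht] := Rc A.
    by move=> s u As Au; have [/asboolP|/asboolP] := HA s u As Au; [left|right].
  by exists t => s As; apply/asboolP; exact: Ht.
have [t Ht] := @ZL_preorder T t0 (fun a b => `[< R a b >]) H1 H2 H3.
by exists t => s /asboolP /Ht /asboolP.
Qed.
End ZW.

Section Alg.
Variable X : BanachSpace.
Local Notation "x +v y" := (vadd X x y) (at level 50, left associativity).
Local Notation "a *v x" := (vscale X a x) (at level 40, no associativity).
Local Notation "0v" := (vzero X).

Lemma add0l (x : X) : 0v +v x = x.
Proof. rewrite vadd_comm; apply vadd_zero. Qed.

Lemma add_cancel_l (a x y : X) : a +v x = a +v y -> x = y.
Proof.
  intro H. rewrite <- (add0l x), <- (add0l y), <- (vadd_opp X a), (vadd_comm X a).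
  rewrite <- !vadd_assoc, H. reflexivity.
Qed.

Lemma scale0 (x : X) : 0 *v x = 0v.
Proof.
  apply (add_cancel_l (0 *v x)). rewrite vadd_zero, <- vscale_adds.
  f_equal; ring.
Qed.

Lemma scalev0 (a : R) : a *v 0v = 0v.
Proof.
  apply (add_cancel_l (a *v 0v)). rewrite vadd_zero, <- vscale_addv, vadd_zero. reflexivity.
Qed.

Lemma opp_eq (x : X) : vopp X x = (-1) *v x.
Proof.
  apply (add_cancel_l x). rewrite vadd_opp.
  rewrite <- (vscale_one X x) at 1. rewrite <- vscale_adds.
  replace (1 + -1) with 0 by ring. rewrite scale0. reflexivity.
Qed.

Lemma norm0 : vnorm X 0v = 0.
Proof. rewrite <- (scale0 0v), vnorm_scale, Rabs_R0. ring. Qed.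

Inductive vexp := EAtom (n : nat) | EZero | EAdd (a b : vexp) | EScale (r : R) (a : vexp) | EOpp (a : vexp).

Fixpoint veval (env : list X) (e : vexp) : X :=
  match e with
  | EAtom n => nth n env 0v
  | EZero => 0v
  | EAdd a b => veval env a +v veval env b
  | EScale r a => r *v veval env a
  | EOpp a => vopp X (veval env a)
  end.

Fixpoint nf (e : vexp) : list (R * nat) :=
  match e with
  | EAtom n => (1, n) :: nil
  | EZero => nil
  | EAdd a b => nf a ++ nf b
  | EScale r a => map (fun p => (r * fst p, snd p)) (nf a)
  | EOpp a => map (fun p => (-1 * fst p, snd p)) (nf a)
  end.

Fixpoint nfeval (env : list X) (l : list (R * nat)) : X :=
  match l with
  | nil => 0v
  | (c, i) :: t => c *v nth i env 0v +v nfeval env t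
  end.

Lemma nfeval_app env l1 l2 : nfeval env (l1 ++ l2) = nfeval env l1 +v nfeval env l2.
Proof.
  induction l1 as [|[c i] t IH]; simpl. rewrite add0l; reflexivity.
  rewrite IH, vadd_assoc. reflexivity.
Qed.

Lemma nfeval_scale env r l : nfeval env (map (fun p => (r * fst p, snd p)) l) = r *v nfeval env l.
Proof.
  induction l as [|[c i] t IH]; simpl. rewrite scalev0; reflexivity.
  rewrite IH, vscale_addv, vscale_assoc. reflexivity.
Qed.

Lemma nf_correct env e : veval env e = nfeval env (nf e).
Proof.
  induction e; simpl.
  - rewrite vscale_one, vadd_zero. reflexivity.
  - reflexivity.
  - rewrite nfeval_app, IHe1, IHe2. reflexivity.
  - rewrite nfeval_scale, IHe. reflexivity.
  - rewrite nfeval_scale, IHe, opp_eq. reflexivity.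
Qed.

Fixpoint coef (l : list (R * nat)) (n : nat) : R :=
  match l with
  | nil => 0
  | (c, i) :: t => (if Nat.eqb i n then c else 0) + coef t n
  end.

Fixpoint csum (env : list X) (f : nat -> R) (N : nat) : X :=
  match N with
  | O => 0v
  | S N' => csum env f N' +v f N' *v nth N' env 0v
  end.

Lemma csum_ext env f g N : (forall n, (n < N)%nat -> f n = g n) -> csum env f N = csum env g N.
Proof.
  induction N; intro H; simpl. reflexivity.
  rewrite IHN, H. reflexivity. lia. intros; apply H; lia.
Qed.

Lemma add4 (a b c d : X) : (a +v b) +v (c +v d) = (a +v c) +v (b +v d).
Proof.
  rewrite !vadd_assoc. f_equal. rewrite <- !vadd_assoc. f_equal. apply vadd_comm.
Qed.

Lemma csum_add env f g N : csum env (fun n => f n + g n) N = csum env f N +v csum env g N.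
Proof.
  induction N; simpl. rewrite vadd_zero; reflexivity.
  rewrite IHN, vscale_adds, add4. reflexivity.
Qed.

Lemma csum_delta env c i N : csum env (fun n => if Nat.eqb i n then c else 0) N =
   if Nat.ltb i N then c *v nth i env 0v else 0v.
Proof.
  induction N; simpl. reflexivity.
  rewrite IHN. destruct (Nat.eqb i N) eqn:E.
  - apply Nat.eqb_eq in E; subst. rewrite Nat.ltb_irrefl.
    replace (Nat.ltb N (S N)) with true. rewrite add0l; reflexivity.
    symmetry; apply Nat.ltb_lt; lia.
  - rewrite scale0, vadd_zero. apply Nat.eqb_neq in E.
    destruct (Nat.ltb i N) eqn:E1; destruct (Nat.ltb i (S N)) eqn:E2; auto;
    apply Nat.ltb_lt in E1 || apply Nat.ltb_ge in E1;
    apply Nat.ltb_lt in E2 || apply Nat.ltb_ge in E2; lia.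
Qed.

Definition allbelow (N : nat) (l : list (R * nat)) := forall c i, In (c, i) l -> (i < N)%nat.

Lemma nfeval_csum env N l : allbelow N l -> nfeval env l = csum env (coef l) N.
Proof.
  induction l as [|[c i] t IH]; intro H; simpl.
  - clear H. induction N; simpl. reflexivity. rewrite <- IHN, scale0, vadd_zero; reflexivity.
  - rewrite csum_add, csum_delta. replace (Nat.ltb i N) with true.
    rewrite IH; [reflexivity|]. intros c' i' Hi; apply (H c' i'); simpl; auto.
    symmetry; apply Nat.ltb_lt. apply (H c i); simpl; auto.
Qed.

Fixpoint atoms_ok (N : nat) (e : vexp) : bool :=
  match e with
  | EAtom n => Nat.ltb n N
  | EZero => true
  | EAdd a b => andb (atoms_ok N a) (atoms_ok N b)
  | EScale _ a => atoms_ok N a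
  | EOpp a => atoms_ok N a
  end.

Lemma atoms_ok_below N e : atoms_ok N e = true -> allbelow N (nf e).
Proof.
  induction e; simpl; intros H c i Hi.
  - destruct Hi as [Hi|[]]. inversion Hi; subst. apply Nat.ltb_lt; auto.
  - destruct Hi.
  - apply andb_prop in H; destruct H. apply in_app_or in Hi; destruct Hi.
    eapply IHe1; eauto. eapply IHe2; eauto.
  - apply in_map_iff in Hi. destruct Hi as [[c' i'] [E Hi]]. inversion E; subst.
    eapply IHe; eauto.
  - apply in_map_iff in Hi. destruct Hi as [[c' i'] [E Hi]]. inversion E; subst.
    eapply IHe; eauto.
Qed.

Fixpoint check (N : nat) (P : nat -> Prop) : Prop :=
  match N with O => True | S N' => check N' P /\ P N' end.

Lemma check_ok N P : check N P -> forall n, (n < N)%nat -> P n.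
Proof.
  induction N; simpl; intros H n Hn. lia. destruct H.
  destruct (Nat.eq_dec n N). subst; auto. apply IHN; auto; lia.
Qed.

Lemma reify_eq env e1 e2 :
  atoms_ok (length env) e1 = true -> atoms_ok (length env) e2 = true ->
  check (length env) (fun n => coef (nf e1) n = coef (nf e2) n) ->
  veval env e1 = veval env e2.
Proof.
  intros H1 H2 H. rewrite !nf_correct.
  rewrite (nfeval_csum env (length env)), (nfeval_csum env (length env)).
  apply csum_ext. apply check_ok; auto.
  apply atoms_ok_below; auto. apply atoms_ok_below; auto.
Qed.

End Alg.

Ltac vmem t l := lazymatch l with
  | nil => constr:(false)
  | t :: _ => constr:(true)
  | _ :: ?l' => vmem t l' end.

Ltac vcollect t env := lazymatch t with
  | vadd _ ?a ?b => let env1 := vcollect a env in vcollect b env1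
  | vscale _ _ ?a => vcollect a env
  | vopp _ ?a => vcollect a env
  | vzero _ => env
  | _ => let b := vmem t env in
         lazymatch b with true => env | false => constr:(t :: env) end
  end.

Ltac vidx t l := lazymatch l with
  | t :: _ => constr:(O)
  | _ :: ?l' => let n := vidx t l' in constr:(S n) end.

Ltac vreify t env := lazymatch t with
  | vadd _ ?a ?b => let ra := vreify a env in let rb := vreify b env in constr:(EAdd ra rb)
  | vscale _ ?r ?a => let ra := vreify a env in constr:(EScale r ra)
  | vopp _ ?a => let ra := vreify a env in constr:(EOpp ra)
  | vzero _ => constr:(EZero)
  | _ => let n := vidx t env in constr:(EAtom n)
  end.

Ltac vring :=
  unfold vsub;
  lazymatch goal with
  | |- @eq (carrier ?X) ?a ?b =>
    let env0 := vcollect a (@nil (carrier X)) in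
    let env1 := vcollect b env0 in
    let env := env1 in
    let ea := vreify a env in
    let eb := vreify b env in
    change (veval X env ea = veval X env eb);
    apply reify_eq; [reflexivity | reflexivity |
      cbn [check coef nf length app map fst snd Nat.eqb]; repeat split; try ring]
  end.

Definition subsp {X : BanachSpace} (D : X -> Prop) :=
  D (vzero X) /\ (forall x y, D x -> D y -> D (vadd X x y)) /\ (forall a x, D x -> D (vscale X a x)).
Definition linon {X : BanachSpace} (D : X -> Prop) (h : X -> R) :=
  (forall x y, D x -> D y -> h (vadd X x y) = h x + h y) /\ (forall a x, D x -> h (vscale X a x) = a * h x).

Section HB.
Variable X : BanachSpace.
Local Notation "x +v y" := (vadd X x y) (at level 50, left associativity).
Local Notation "a *v x" := (vscale X a x) (at level 40, no associativity).
Local Notation "0v" := (vzero X).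

Lemma uniq_rep (D : X -> Prop) (HD : subsp D) (y : X) (Hy : ~ D y) z z' t t' :
  D z -> D z' -> z +v t *v y = z' +v t' *v y -> t = t' /\ z = z'.
Proof.
  intros Hz Hz' H.
  assert (E : z' = z +v t *v y +v (-t') *v y).
  { transitivity (z' +v t' *v y +v (-t') *v y). vring. rewrite <- H; reflexivity. }
  destruct (Req_dec t t') as [e|ne].
  - subst t'. split; auto. rewrite E. vring.
  - exfalso. apply Hy. destruct HD as [H0 [Ha Hs]].
    replace y with ((1 / (t - t')) *v (z' +v (-1) *v z)).
    apply Hs, Ha; auto.
    rewrite E. vring. field. lra.
Qed.

Lemma adjoin (D : X -> Prop) (HD : subsp D) (y : X) (Hy : ~ D y) :
  exists (zc : X -> X) (tc : X -> R), forall z t, D z -> zc (z +v t *v y) = z /\ tc (z +v t *v y) = t.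
Proof.
  set (ch := fun w : X => epsilon (inhabits (0v, 0)) (fun q : X * R => D (fst q) /\ w = fst q +v snd q *v y)).
  exists (fun w => fst (ch w)), (fun w => snd (ch w)).
  intros z t Hz.
  assert (Hex : exists q : X * R, D (fst q) /\ z +v t *v y = fst q +v snd q *v y) by (exists (z, t); auto).
  pose proof (epsilon_spec (inhabits (0v, 0)) _ Hex) as [H1 H2].
  fold (ch (z +v t *v y)) in H1, H2.
  destruct (uniq_rep D HD y Hy _ _ _ _ Hz H1 H2). split; symmetry; auto.
Qed.

Variable p : X -> R.
Hypothesis p_add : forall x y, p (x +v y) <= p x + p y.
Hypothesis p_pos : forall a x, 0 <= a -> p (a *v x) = a * p x.

Lemma hb_step (D : X -> Prop) (h : X -> R) (Hs : subsp D) (Hl : linon D h)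
  (Hp : forall x, D x -> h x <= p x) (y : X) (Hy : ~ D y) :
  exists (D' : X -> Prop) (h' : X -> R), subsp D' /\ linon D' h' /\ (forall x, D' x -> h' x <= p x)
    /\ (forall x, D x -> D' x /\ h' x = h x) /\ D' y.
Proof.
  destruct Hs as [H0 [Ha Hsc]]. destruct Hl as [La Ls].
  assert (Key : forall z z', D z -> D z' -> h z - p (z +v (-1) *v y) <= p (z' +v y) - h z').
  { intros z z' Hz Hz'.
    assert (h z + h z' <= p (z +v (-1) *v y) + p (z' +v y)); [|lra].
    rewrite <- La; auto. eapply Rle_trans. apply Hp; auto.
    replace (z +v z') with ((z +v (-1) *v y) +v (z' +v y)) by vring. apply p_add. }
  set (E := fun v => exists z, D z /\ v = h z - p (z +v (-1) *v y)).
  destruct (completeness E) as [c [Hub Hlub]].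
  { exists (p (0v +v y) - h 0v). intros v [z [Hz ->]]. apply Key; auto. }
  { exists (h 0v - p (0v +v (-1) *v y)). exists 0v; auto. }
  assert (Hc1 : forall z, D z -> h z - p (z +v (-1) *v y) <= c).
  { intros z Hz. apply Hub. exists z; auto. }
  assert (Hc2 : forall z', D z' -> c <= p (z' +v y) - h z').
  { intros z' Hz'. apply Hlub. intros v [z [Hz ->]]. apply Key; auto. }
  clear Hub Hlub Key.
  destruct (adjoin D (conj H0 (conj Ha Hsc)) y Hy) as [zc [tc Hzt]].
  set (h' := fun w => h (zc w) + tc w * c).
  assert (Hh' : forall z t, D z -> h' (z +v t *v y) = h z + t * c).
  { intros z t Hz. unfold h'. destruct (Hzt z t Hz) as [-> ->]. reflexivity. }
  exists (fun w => exists z t, D z /\ w = z +v t *v y), h'.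
  split; [|split; [|split; [|split]]].
  - split; [|split].
    + exists 0v, 0. split; auto. vring.
    + intros w1 w2 [z1 [t1 [Hz1 ->]]] [z2 [t2 [Hz2 ->]]]. exists (z1 +v z2), (t1 + t2).
      split; auto. vring.
    + intros a w [z [t [Hz ->]]]. exists (a *v z), (a * t). split; auto. vring.
  - split.
    + intros w1 w2 [z1 [t1 [Hz1 ->]]] [z2 [t2 [Hz2 ->]]].
      replace (z1 +v t1 *v y +v (z2 +v t2 *v y)) with ((z1 +v z2) +v (t1 + t2) *v y) by vring.
      rewrite !Hh', La; auto. ring.
    + intros a w [z [t [Hz ->]]].
      replace (a *v (z +v t *v y)) with ((a *v z) +v (a * t) *v y) by vring.
      rewrite !Hh', Ls; auto. ring.
  - intros w [z [t [Hz ->]]]. rewrite Hh'; auto.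
    destruct (Rtotal_order t 0) as [Hn|[H0'|Hpos]].
    + set (s := - t). assert (Hs0 : 0 < s) by (unfold s; lra).
      pose proof (Hc1 ((/ s) *v z) (Hsc _ _ Hz)) as Hc. rewrite Ls in Hc; auto.
      replace (z +v t *v y) with (s *v ((/ s) *v z +v (-1) *v y)).
      rewrite p_pos by lra.
      assert (s * (/ s * h z - p (/ s *v z +v -1 *v y)) <= s * c) by (apply Rmult_le_compat_l; lra).
      replace t with (- s) by (unfold s; ring).
      replace (s * (/ s * h z - p (/ s *v z +v -1 *v y))) with (h z - s * p (/ s *v z +v -1 *v y)) in H by (field; lra).
      lra.
      vring; unfold s; field; lra.
    + subst t. replace (z +v 0 *v y) with z by vring. rewrite Rmult_0_l, Rplus_0_r. auto.
    + pose proof (Hc2 ((/ t) *v z) (Hsc _ _ Hz)) as Hc. rewrite Ls in Hc; auto.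
      replace (z +v t *v y) with (t *v ((/ t) *v z +v y)).
      rewrite p_pos by lra.
      assert (t * c <= t * (p (/ t *v z +v y) - / t * h z)) by (apply Rmult_le_compat_l; lra).
      replace (t * (p (/ t *v z +v y) - / t * h z)) with (t * p (/ t *v z +v y) - h z) in H by (field; lra).
      lra.
      vring; field; lra.
  - intros x Hx. split.
    + exists x, 0. split; auto. vring.
    + replace x with (x +v 0 *v y) at 1 by vring. rewrite Hh'; auto. ring.
  - exists 0v, 1. split; auto. vring.
Qed.

End HB.

Section HB2.
Variable X : BanachSpace.
Local Notation "x +v y" := (vadd X x y) (at level 50, left associativity).
Local Notation "a *v x" := (vscale X a x) (at level 40, no associativity).
Local Notation "0v" := (vzero X).
Variable p : X -> R.
Hypothesis p_add : forall x y, p (x +v y) <= p x + p y.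
Hypothesis p_pos : forall a x, 0 <= a -> p (a *v x) = a * p x.

Theorem hahn_banach (M : X -> Prop) (g : X -> R) (HM : subsp M) (Hg : linon M g)
  (Hgp : forall x, M x -> g x <= p x) :
  exists f : X -> R, linon (fun _ => True) f /\ (forall x, M x -> f x = g x) /\ (forall x, f x <= p x).
Proof.
  set (ok := fun q : (X -> Prop) * (X -> R) =>
    subsp (fst q) /\ (forall x, M x -> fst q x) /\ linon (fst q) (snd q) /\
    (forall x, fst q x -> snd q x <= p x) /\ (forall x, M x -> snd q x = g x)).
  set (T := {q | ok q}).
  assert (ok0 : ok (M, g)) by (repeat split; simpl; firstorder).
  set (t0 := exist ok (M, g) ok0 : T).
  set (Rl := fun a b : T => (forall x, fst (proj1_sig a) x -> fst (proj1_sig b) x) /\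
                    (forall x, fst (proj1_sig a) x -> snd (proj1_sig b) x = snd (proj1_sig a) x)).
  destruct (ZW.zorn_pre T t0 Rl) as [t Ht].
  - intro a; split; auto.
  - intros a b c [H1 H2] [H3 H4]; split; auto.
    intros x Hx. rewrite H4, H2; auto.
  - intros A Hch.
    destruct (classic (exists a, A a)) as [[a0 Ha0]|Hne].
    2:{ exists t0. intros s Hs; exfalso; apply Hne; eauto. }
    set (ch := fun x => epsilon (inhabits t0) (fun a : T => A a /\ fst (proj1_sig a) x)).
    set (Ds := fun x => exists a, A a /\ fst (proj1_sig a) x).
    set (hs := fun x => snd (proj1_sig (ch x)) x).
    assert (Kh : forall b x, A b -> fst (proj1_sig b) x -> hs x = snd (proj1_sig b) x).
    { intros b x Hb Hx. unfold hs.
      destruct (epsilon_spec (inhabits t0) (fun a : T => A a /\ fst (proj1_sig a) x) (ex_intro _ b (conj Hb Hx))) as [Ha Hax].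
      fold (ch x) in Ha, Hax.
      destruct (Hch _ _ Ha Hb) as [[_ E]|[_ E]]; rewrite E; auto. }
    assert (Two : forall x y, Ds x -> Ds y -> exists c, A c /\ fst (proj1_sig c) x /\ fst (proj1_sig c) y).
    { intros x y [a [Ha Hx]] [b [Hb Hy]].
      destruct (Hch _ _ Ha Hb) as [[E _]|[E _]].
      exists b; auto. exists a; auto. }
    assert (okc : forall c : T, ok (proj1_sig c)) by (intro c; exact (proj2_sig c)).
    assert (oks : ok (Ds, hs)).
    { destruct (okc a0) as [[Z0 _] [Mi _]].
      split; [split; [|split]|split; [|split; [split|split]]]; simpl.
      - exists a0; auto.
      - intros x y Hx Hy. destruct (Two x y Hx Hy) as [c [Hc [Hcx Hcy]]].
        exists c; split; auto. apply (proj1 (proj2 (proj1 (okc c)))); auto.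
      - intros a x [c [Hc Hcx]]. exists c; split; auto. apply (proj2 (proj2 (proj1 (okc c)))); auto.
      - intros x Hx; exists a0; auto.
      - intros x y Hx Hy. destruct (Two x y Hx Hy) as [c [Hc [Hcx Hcy]]].
        destruct (okc c) as [[_ [Sa _]] [_ [[La _] _]]].
        rewrite !(Kh c); auto.
      - intros a x [c [Hc Hcx]].
        destruct (okc c) as [[_ [_ Ss]] [_ [[_ Ls] _]]].
        rewrite !(Kh c); auto.
      - intros x [c [Hc Hcx]]. rewrite (Kh c); auto. apply (okc c); auto.
      - intros x Hx. rewrite (Kh a0); auto. apply (okc a0); auto. }
    exists (exist ok (Ds, hs) oks). intros s Hs. split; simpl.
    + intros x Hx; exists s; auto.
    + intros x Hx. apply Kh; auto.
  - destruct t as [[D h] okt]. simpl in *.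
    destruct okt as [Ss [Mi [Lh [Hp Hmg]]]]. simpl in Ss, Mi, Lh, Hp, Hmg.
    assert (All : forall y, D y).
    { intro y. apply NNPP; intro Hy.
      destruct (hb_step X p p_add p_pos D h Ss Lh Hp y Hy) as [D' [h' [S' [L' [P' [Ext Dy]]]]]].
      assert (ok' : ok (D', h')).
      { unfold ok; simpl. split; [exact S'|split; [|split; [exact L'|split; [exact P'|]]]].
        - intros z Hz; apply Ext, Mi; auto.
        - intros z Hz. rewrite (proj2 (Ext z (Mi z Hz))); auto. }
      destruct (Ht (exist ok (D', h') ok')) as [R1 _].
      + split; simpl. intros z Hz; apply Ext; auto. intros z Hz; apply Ext; auto.
      + exact (Hy (R1 y Dy)). }
    exists h. split; [|split]; auto.
    destruct Lh as [La Ls]. split; intros; auto.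
Qed.

End HB2.

Section Sep.
Variable X : BanachSpace.
Local Notation "x +v y" := (vadd X x y) (at level 50, left associativity).
Local Notation "a *v x" := (vscale X a x) (at level 40, no associativity).
Local Notation "0v" := (vzero X).

Lemma sep_functional (D : X -> Prop) (HD : subsp D) (y : X) (d : R) (Hd0 : 0 < d)
  (Hd : forall z, D z -> d <= vnorm X (y +v (-1) *v z)) :
  exists f : X -> R, linon (fun _ => True) f /\ (forall z, D z -> f z = 0) /\ f y = 1 /\
    (forall x, Rabs (f x) <= / d * vnorm X x).
Proof.
  assert (Hy : ~ D y).
  { intro Hy. specialize (Hd y Hy). replace (y +v (-1) *v y) with (0 *v y) in Hd by vring.
    rewrite vnorm_scale, Rabs_R0 in Hd. lra. }
  destruct HD as [H0 [Ha Hs]].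
  destruct (adjoin X D (conj H0 (conj Ha Hs)) y Hy) as [zc [tc Hzt]].
  set (M := fun w => exists z t, D z /\ w = z +v t *v y).
  set (p := fun x => / d * vnorm X x).
  assert (Hid : 0 < / d) by (apply Rinv_0_lt_compat; auto).
  assert (p_add : forall x y, p (x +v y) <= p x + p y).
  { intros a b; unfold p. rewrite <- Rmult_plus_distr_l. apply Rmult_le_compat_l. lra. apply vnorm_triangle. }
  assert (p_pos : forall a x, 0 <= a -> p (a *v x) = a * p x).
  { intros a x Ha0; unfold p. rewrite vnorm_scale, Rabs_pos_eq; auto. ring. }
  assert (HM : subsp M).
  { split; [|split].
    - exists 0v, 0. split; auto. vring.
    - intros w1 w2 [z1 [t1 [Hz1 ->]]] [z2 [t2 [Hz2 ->]]]. exists (z1 +v z2), (t1 + t2).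
      split; auto. vring.
    - intros a w [z [t [Hz ->]]]. exists (a *v z), (a * t). split; auto. vring. }
  assert (Htc : forall z t, D z -> tc (z +v t *v y) = t) by (intros; apply Hzt; auto).
  assert (Hg : linon M tc).
  { split.
    - intros w1 w2 [z1 [t1 [Hz1 ->]]] [z2 [t2 [Hz2 ->]]].
      replace (z1 +v t1 *v y +v (z2 +v t2 *v y)) with ((z1 +v z2) +v (t1 + t2) *v y) by vring.
      rewrite !Htc; auto.
    - intros a w [z [t [Hz ->]]].
      replace (a *v (z +v t *v y)) with ((a *v z) +v (a * t) *v y) by vring.
      rewrite !Htc; auto. }
  assert (Hgp : forall x, M x -> tc x <= p x).
  { intros w [z [t [Hz ->]]]. rewrite Htc; auto. unfold p.
    destruct (Req_dec t 0) as [->|Ht].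
    - apply Rmult_le_pos. lra. apply vnorm_nonneg.
    - replace (z +v t *v y) with (t *v (y +v (-1) *v ((- / t) *v z))) by (vring; field; auto).
      rewrite vnorm_scale.
      assert (d <= vnorm X (y +v -1 *v (- / t *v z))) by (apply Hd, Hs; auto).
      assert (t <= Rabs t) by apply Rle_abs.
      assert (0 <= Rabs t) by apply Rabs_pos.
      apply Rle_trans with (/ d * (Rabs t * d)).
      + replace (/ d * (Rabs t * d)) with (Rabs t) by (field; lra). lra.
      + apply Rmult_le_compat_l. lra. apply Rmult_le_compat_l; auto. }
  destruct (hahn_banach X p p_add p_pos M tc HM Hg Hgp) as [f [[Lf Sf] [Ef Bf]]].
  exists f. split; [split; auto|split; [|split]].
  - intros z Hz. replace z with (z +v 0 *v y) by vring. rewrite Ef. apply Htc; auto.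
    exists z, 0; auto.
  - replace y with (0v +v 1 *v y) by vring. rewrite Ef. apply Htc; auto. exists 0v, 1; auto.
  - intro x. apply Rabs_le. split.
    + assert (f ((-1) *v x) <= p ((-1) *v x)) by apply Bf.
      rewrite Sf in H by auto. unfold p in H. rewrite vnorm_scale in H.
      replace (Rabs (-1)) with 1 in H. unfold p. lra.
      unfold Rabs; destruct (Rcase_abs (-1)); lra.
    + apply Bf.
Qed.

End Sep.

Definition rs (g : nat -> R) (s m : nat) : R := fold_right (fun k acc => g k + acc) 0 (seq s m).

Lemma rs_delta g j : forall m s, (forall k, (s <= k < s + m)%nat -> k <> j -> g k = 0) ->
  (s <= j < s + m)%nat -> rs g s m = g j.
Proof.
  induction m; intros s H Hj. lia.
  unfold rs; simpl. fold (rs g (S s) m).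
  destruct (Nat.eq_dec s j) as [<-|ne].
  - assert (rs g (S s) m = 0).
    { clear IHm Hj. revert s H. induction m; intros s H. reflexivity.
      unfold rs; simpl; fold (rs g (S (S s)) m). rewrite H by lia. rewrite IHm. ring.
      intros k Hk Hne. apply H; lia. }
    rewrite H0; ring.
  - rewrite H by lia. rewrite IHm. ring. intros k Hk Hne; apply H; lia. lia.
Qed.

Lemma rs_zero g : forall m s, (forall k, (s <= k < s + m)%nat -> g k = 0) -> rs g s m = 0.
Proof.
  induction m; intros s H. reflexivity. unfold rs; simpl; fold (rs g (S s) m).
  rewrite H by lia. rewrite IHm. ring. intros; apply H; lia.
Qed.

Lemma rs_add g1 g2 : forall m s, rs (fun k => g1 k + g2 k) s m = rs g1 s m + rs g2 s m.
Proof.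
  induction m; intros s. unfold rs; simpl; ring. unfold rs; simpl.
  fold (rs g1 (S s) m) (rs g2 (S s) m) (rs (fun k => g1 k + g2 k) (S s) m). rewrite IHm. ring.
Qed.

Lemma rs_scale a g : forall m s, rs (fun k => a * g k) s m = a * rs g s m.
Proof.
  induction m; intros s. unfold rs; simpl; ring. unfold rs; simpl.
  fold (rs g (S s) m) (rs (fun k => a * g k) (S s) m). rewrite IHm. ring.
Qed.

Lemma rs_ext g1 g2 : forall m s, (forall k, (s <= k < s + m)%nat -> g1 k = g2 k) -> rs g1 s m = rs g2 s m.
Proof.
  induction m; intros s H. reflexivity. unfold rs; simpl.
  fold (rs g1 (S s) m) (rs g2 (S s) m). rewrite H, IHm; auto; try lia. intros; apply H; lia.
Qed.

Section Seq.
Variable X : BanachSpace.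
Local Notation "x +v y" := (vadd X x y) (at level 50, left associativity).
Local Notation "a *v x" := (vscale X a x) (at level 40, no associativity).
Local Notation "0v" := (vzero X).

Lemma dual_lin (f : X -> R) : is_dual_elem f -> linon (fun _ => True) f.
Proof. intros [A [S _]]; split; auto. Qed.

Lemma lin_lincomb (f : X -> R) (a : nat -> R) (xs : nat -> X) :
  (forall x y, f (x +v y) = f x + f y) -> (forall a x, f (a *v x) = a * f x) ->
  forall m s, f (lincomb (map (fun k => (a k, xs k)) (seq s m))) = rs (fun k => a k * f (xs k)) s m.
Proof.
  intros A S. assert (f0 : f 0v = 0).
  { replace 0v with (0 *v 0v) by vring. rewrite S; ring. }
  induction m; intros s; simpl. auto.
  rewrite A, S, IHm. unfold rs; simpl. reflexivity.
Qed.

Lemma combine_map (a : nat -> R) (xs : nat -> X) (l : list nat) :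
  combine (map a l) (map xs l) = map (fun k => (a k, xs k)) l.
Proof. induction l; simpl; auto. rewrite IHl; auto. Qed.

Lemma rs_bound (u : nat -> X -> R) : forall m s,
  (forall k, (s <= k < s + m)%nat -> exists C, forall x, Rabs (u k x) <= C * vnorm X x) ->
  exists C, forall x, Rabs (rs (fun k => u k x) s m) <= C * vnorm X x.
Proof.
  induction m; intros s H.
  - exists 0. intros x. unfold rs; simpl. rewrite Rabs_R0. lra.
  - destruct (H s) as [C1 H1]. lia.
    destruct (IHm (S s)) as [C2 H2]. intros; apply H; lia.
    exists (C1 + C2). intro x. unfold rs; simpl. fold (rs (fun k => u k x) (S s) m).
    eapply Rle_trans. apply Rabs_triang. specialize (H1 x); specialize (H2 x). lra.
Qed.

Definition bio_upto (n : nat) (xs : nat -> X) (fs : nat -> X -> R) :=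
  (forall j, (j < n)%nat -> is_dual_elem (fs j) /\ fs j (xs j) = 1) /\
  (forall j k, (j < n)%nat -> (k < n)%nat -> j <> k -> fs j (xs k) = 0).

Hypothesis hinf : infinite_dimensional X.

Lemma seq_step n xs fs : bio_upto n xs fs ->
  exists q : X * (X -> R), is_dual_elem (snd q) /\ snd q (fst q) = 1 /\
    (forall j, (j < n)%nat -> snd q (xs j) = 0 /\ fs j (fst q) = 0).
Proof.
  intros [B1 B2].
  destruct (hinf (map xs (seq 0 n))) as [y Hy].
  set (P := lincomb (map (fun k => (fs k y, xs k)) (seq 0 n))).
  set (y' := y +v (-1) *v P).
  assert (Hfy : forall j, (j < n)%nat -> fs j y' = 0).
  { intros j Hj. destruct (B1 j Hj) as [[A [S _]] E].
    unfold y'. rewrite A, S. unfold P. rewrite (lin_lincomb _ _ _ A S).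
    rewrite (rs_delta _ j). rewrite E. ring.
    intros k Hk Hne. rewrite B2; auto; try lia. ring. lia. }
  assert (Hy0 : y' <> 0v).
  { intro E. apply Hy. exists (map (fun k => fs k y) (seq 0 n)). split.
    rewrite !map_length; auto. rewrite combine_map. fold P.
    transitivity (y' +v P). unfold y'; vring. rewrite E; vring. }
  assert (Hn : 0 < vnorm X y').
  { destruct (vnorm_nonneg X y'); auto. exfalso; apply Hy0, vnorm_eq0; auto. }
  destruct (sep_functional X (fun z => z = 0v)) with (y := y') (d := vnorm X y') as [h [[Ah Sh] [_ [H1 Bh]]]]; auto.
  { split; [|split]; auto. intros a b -> ->; vring. intros a x ->; vring. }
  { intros z ->. right. f_equal. vring. }
  set (g := fun x => h x - rs (fun k => h (xs k) * fs k x) 0 n).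
  exists (y', g). simpl. split; [|split].
  - split; [|split].
    + intros a b. unfold g. rewrite Ah; auto.
      rewrite (rs_ext (fun k => h (xs k) * fs k (a +v b)) (fun k => h (xs k) * fs k a + h (xs k) * fs k b)).
      rewrite rs_add; ring.
      intros k Hk. destruct (B1 k ltac:(lia)) as [[A _] _]. rewrite A; ring.
    + intros c a. unfold g. rewrite Sh; auto.
      rewrite (rs_ext (fun k => h (xs k) * fs k (c *v a)) (fun k => c * (h (xs k) * fs k a))).
      rewrite rs_scale; ring.
      intros k Hk. destruct (B1 k ltac:(lia)) as [[_ [S _]] _]. rewrite S; ring.
    + destruct (rs_bound (fun k x => h (xs k) * fs k x) n 0) as [C HC].
      { intros k Hk. destruct (B1 k ltac:(lia)) as [[_ [_ [Ck HCk]]] _].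
        exists (Rabs (h (xs k)) * Ck). intro x. rewrite Rabs_mult, Rmult_assoc.
        apply Rmult_le_compat_l. apply Rabs_pos. auto. }
      exists (/ vnorm X y' + C). intro x. unfold g.
      eapply Rle_trans. unfold Rminus. apply Rabs_triang. rewrite Rabs_Ropp.
      specialize (Bh x); specialize (HC x). lra.
  - unfold g. rewrite H1, rs_zero. ring. intros k Hk. rewrite Hfy; try ring; lia.
  - intros j Hj. split; auto. unfold g.
    rewrite (rs_delta _ j). destruct (B1 j Hj) as [_ ->]. ring.
    intros k Hk Hne. rewrite B2; auto; try lia; ring. lia.
Qed.

End Seq.

Definition upd {A : Type} (v : nat -> A) (n : nat) (a : A) : nat -> A :=
  fun k => if Nat.eqb k n then a else v k.

Section SeqBuild.
Variable X : BanachSpace.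
Hypothesis hinf : infinite_dimensional X.

Definition stepq (n : nat) (xs : nat -> X) (fs : nat -> X -> R) : X * (X -> R) :=
  epsilon (inhabits (vzero X, fun _ => 0)) (fun q : X * (X -> R) => is_dual_elem (snd q) /\ snd q (fst q) = 1 /\
    (forall j, (j < n)%nat -> snd q (xs j) = 0 /\ fs j (fst q) = 0)).

Fixpoint Fseq (n : nat) : (nat -> X) * (nat -> X -> R) :=
  match n with
  | O => (fun _ => vzero X, fun _ _ => 0)
  | S n' => let xs := fst (Fseq n') in let fs := snd (Fseq n') in
            let q := stepq n' xs fs in (upd xs n' (fst q), upd fs n' (snd q))
  end.

Lemma Fseq_bio n : bio_upto X n (fst (Fseq n)) (snd (Fseq n)).
Proof.
  induction n.
  - split; intros; lia.
  - simpl. set (xs := fst (Fseq n)) in *. set (fs := snd (Fseq n)) in *.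
    destruct (epsilon_spec (inhabits (vzero X, fun _ => 0)) (fun q : X * (X -> R) => is_dual_elem (snd q) /\ snd q (fst q) = 1 /\
      (forall j, (j < n)%nat -> snd q (xs j) = 0 /\ fs j (fst q) = 0)) (seq_step X hinf n xs fs IHn)) as [D1 [D2 D3]].
    fold (stepq n xs fs) in D1, D2, D3.
    destruct IHn as [B1 B2].
    split.
    + intros j Hj. unfold upd. destruct (Nat.eqb j n) eqn:E.
      * auto.
      * apply Nat.eqb_neq in E. apply B1; lia.
    + intros j k Hj Hk Hjk. unfold upd.
      destruct (Nat.eq_dec j n) as [->|n1]; destruct (Nat.eq_dec k n) as [->|n2]; [lia| | |];
      rewrite ?Nat.eqb_refl; rewrite ?(proj2 (Nat.eqb_neq _ _) n1); rewrite ?(proj2 (Nat.eqb_neq _ _) n2).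
      * apply D3; lia.
      * apply D3; lia.
      * apply B2; lia.
Qed.

Lemma Fseq_stable d n k : (k < n)%nat -> fst (Fseq (n + d)) k = fst (Fseq n) k /\ snd (Fseq (n + d)) k = snd (Fseq n) k.
Proof.
  intro Hk. induction d.
  - rewrite Nat.add_0_r; auto.
  - replace (n + S d)%nat with (S (n + d)) by lia. simpl. unfold upd.
    replace (Nat.eqb k (n + d)) with false. auto. symmetry; apply Nat.eqb_neq; lia.
Qed.

Lemma Fseq_at m k : (k < m)%nat -> fst (Fseq m) k = fst (Fseq (S k)) k /\ snd (Fseq m) k = snd (Fseq (S k)) k.
Proof.
  intro H. replace m with (S k + (m - S k))%nat by lia. apply Fseq_stable; lia.
Qed.

Lemma nat_biort : biorthogonal (fun k => fst (Fseq (S k)) k) (fun k => snd (Fseq (S k)) k).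
Proof.
  split; [|split].
  - intro i. apply (Fseq_bio (S i)); lia.
  - intro i. apply (Fseq_bio (S i)); lia.
  - intros i j Hij. destruct (Fseq_at (S (max i j)) i ltac:(lia)) as [_ E1].
    destruct (Fseq_at (S (max i j)) j ltac:(lia)) as [E2 _].
    rewrite <- E1, <- E2. apply (Fseq_bio (S (max i j))); lia.
Qed.

End SeqBuild.

Lemma nat_into_K (X : BanachSpace) (hinf : infinite_dimensional X) (K : Type) (hK : biort_bound X K) :
  card_le nat K.
Proof. eapply hK. apply (nat_biort X hinf). Qed.

Section Max.
Variable X : BanachSpace.
Local Notation "x +v y" := (vadd X x y) (at level 50, left associativity).
Local Notation "a *v x" := (vscale X a x) (at level 40, no associativity).
Local Notation "0v" := (vzero X).

Definition bioS (S : X * (X -> R) -> Prop) :=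
  (forall q, S q -> is_dual_elem (snd q) /\ snd q (fst q) = 1) /\
  (forall q q', S q -> S q' -> q <> q' -> snd q (fst q') = 0).

Lemma max_bio : exists S, bioS S /\ forall S', bioS S' -> (forall q, S q -> S' q) -> forall q, S' q -> S q.
Proof.
  set (T := {S | bioS S}).
  assert (b0 : bioS (fun _ => False)) by (split; intros; contradiction).
  set (Rl := fun a b : T => forall q, proj1_sig a q -> proj1_sig b q).
  destruct (ZW.zorn_pre T (exist _ _ b0) Rl) as [t Ht].
  - intros a q; auto.
  - intros a b c H1 H2 q Hq; auto.
  - intros A Hch.
    set (Ds := fun q => exists a, A a /\ proj1_sig a q).
    assert (bD : bioS Ds).
    { split.
      - intros q [a [Ha Hq]]. apply (proj1 (proj2_sig a)); auto.
      - intros q q' [a [Ha Hq]] [b [Hb Hq']] Hne.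
        destruct (Hch a b Ha Hb) as [E|E].
        + apply (proj2 (proj2_sig b)); auto.
        + apply (proj2 (proj2_sig a)); auto. }
    exists (exist _ Ds bD). intros s Hs q Hq. exists s; auto.
  - exists (proj1_sig t). split. exact (proj2_sig t).
    intros S' bS' Hsub q Hq. exact (Ht (exist _ S' bS') Hsub q Hq).
Qed.

Lemma lincomb_app (l1 l2 : list (R * X)) : lincomb (l1 ++ l2) = lincomb l1 +v lincomb l2.
Proof. induction l1 as [|[c v] t IH]; simpl. vring. rewrite IH; vring. Qed.

Lemma lincomb_scale (a : R) (l : list (R * X)) :
  lincomb (map (fun p => (a * fst p, snd p)) l) = a *v lincomb l.
Proof. induction l as [|[c v] t IH]; simpl. vring. rewrite IH. rewrite <- vscale_assoc. vring. Qed.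

Variable S : X * (X -> R) -> Prop.
Hypothesis bS : bioS S.
Hypothesis maxS : forall S', bioS S' -> (forall q, S q -> S' q) -> forall q, S' q -> S q.

Definition Ityp := {q | S q}.
Definition xi (i : Ityp) : X := fst (proj1_sig i).
Definition fi (i : Ityp) : X -> R := snd (proj1_sig i).
Definition lcI (l : list (R * Ityp)) : X := lincomb (map (fun p => (fst p, xi (snd p))) l).

Lemma Ibiort : biorthogonal xi fi.
Proof.
  split; [|split].
  - intro i. apply (proj1 bS), (proj2_sig i).
  - intro i. apply (proj1 bS), (proj2_sig i).
  - intros i j Hij. apply (proj2 bS). apply (proj2_sig i). apply (proj2_sig j).
    intro E. apply Hij. destruct i, j; simpl in E. subst. f_equal. apply proof_irrelevance.
Qed.

Lemma approx (y : X) : (forall i, fi i y = 0) -> forall eps, 0 < eps ->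
  exists l, vnorm X (y +v (-1) *v lcI l) < eps.
Proof.
  intros Hy eps Heps. apply NNPP; intro Hno.
  set (Sp := fun z => exists l, z = lcI l).
  assert (HSp : subsp Sp).
  { split; [|split].
    - exists nil; reflexivity.
    - intros a b [l1 ->] [l2 ->]. exists (l1 ++ l2). unfold lcI. rewrite map_app, lincomb_app; auto.
    - intros a b [l ->]. exists (map (fun p => (a * fst p, snd p)) l). unfold lcI.
      rewrite <- lincomb_scale, !map_map. reflexivity. }
  destruct (sep_functional X Sp HSp y eps Heps) as [f [[Af Sf] [Zf [Ef Bf]]]].
  { intros z [l ->]. apply Rnot_lt_le. intro H; apply Hno; exists l; auto. }
  set (S' := fun q => S q \/ q = (y, f)).
  assert (bS' : bioS S').
  { split.
    - intros q [Hq| ->]. apply (proj1 bS); auto. simpl. split; auto.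
      split; [|split]; auto. exists (/ eps); auto.
    - intros q q' [Hq| ->] [Hq'| ->] Hne; simpl.
      + apply (proj2 bS); auto.
      + exact (Hy (exist _ q Hq)).
      + apply Zf. exists ((1, exist _ q' Hq') :: nil). unfold lcI, xi; simpl. vring.
      + contradiction. }
  assert (Hin : S (y, f)) by (apply (maxS S' bS'); [intros q Hq; left; auto | right; auto]).
  specialize (Hy (exist _ (y, f) Hin)). unfold fi in Hy; simpl in Hy. lra.
Qed.

End Max.

Lemma small_zero (a : R) : 0 <= a -> (forall n : nat, a <= 2 / (INR n + 1)) -> a = 0.
Proof.
  intros Ha H. destruct Ha as [Ha|]; auto. exfalso.
  destruct (archimed_cor1 (a / 2)) as [N [HN HN0]]. lra.
  specialize (H N). assert (0 < INR N) by (apply lt_0_INR; auto).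
  assert (2 / (INR N + 1) < 2 / INR N).
  { unfold Rdiv. apply Rmult_lt_compat_l. lra. apply Rinv_lt_contravar. nra. lra. }
  assert (2 / INR N = 2 * / INR N) by (unfold Rdiv; ring). lra.
Qed.

Section Enc.
Variable X : BanachSpace.
Local Notation "x +v y" := (vadd X x y) (at level 50, left associativity).
Local Notation "a *v x" := (vscale X a x) (at level 40, no associativity).
Local Notation "0v" := (vzero X).
Variable S : X * (X -> R) -> Prop.
Hypothesis bS : bioS X S.
Hypothesis maxS : forall S', bioS X S' -> (forall q, S q -> S' q) -> forall q, S' q -> S q.

Definition Tm (x : X) : Ityp X S -> R := fun i => fi X S i x.
Definition rep (t : Ityp X S -> R) : X := epsilon (inhabits 0v) (fun x => Tm x = t).
Definition Lseq (y : X) (n : nat) : list (R * Ityp X S) :=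
  epsilon (inhabits nil) (fun l => vnorm X (y +v (-1) *v lcI X S l) < / (INR n + 1)).
Definition Phi (x : X) := (Tm x, Lseq (x +v (-1) *v rep (Tm x))).

Lemma Phi_inj : forall x x', Phi x = Phi x' -> x = x'.
Proof.
  intros x x' E. unfold Phi in E. injection E as E1 E2.
  rewrite <- E1 in E2.
  set (r := rep (Tm x)) in *.
  assert (Hr : Tm r = Tm x).
  { unfold r, rep. apply (epsilon_spec (inhabits 0v) (fun z => Tm z = Tm x)). exists x; auto. }
  assert (Ker : forall z, Tm z = Tm x -> forall i, fi X S i (z +v (-1) *v r) = 0).
  { intros z Hz i. destruct (proj1 (Ibiort X S bS) i) as [A [Sc _]].
    rewrite A, Sc. change (Tm z i + -1 * Tm r i = 0). rewrite Hz, Hr. ring. }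
  set (y := x +v (-1) *v r) in *. set (y' := x' +v (-1) *v r) in *.
  assert (Ly : forall w, (forall i, fi X S i w = 0) -> forall n, vnorm X (w +v (-1) *v lcI X S (Lseq w n)) < / (INR n + 1)).
  { intros w Hw n. unfold Lseq.
    apply (epsilon_spec (inhabits nil) (fun l => vnorm X (w +v (-1) *v lcI X S l) < / (INR n + 1))).
    apply (approx X S bS maxS w Hw). apply Rinv_0_lt_compat.
    pose proof (pos_INR n); lra. }
  assert (Hy : forall n, vnorm X (y +v (-1) *v y') <= 2 / (INR n + 1)).
  { intro n. pose proof (Ly y (Ker x eq_refl) n) as H1. pose proof (Ly y' (Ker x' (eq_sym E1)) n) as H2.
    rewrite <- E2 in H2. set (z := lcI X S (Lseq y n)) in *.
    replace (y +v (-1) *v y') with ((y +v (-1) *v z) +v (-1) *v (y' +v (-1) *v z)) by vring.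
    eapply Rle_trans. apply vnorm_triangle. rewrite (vnorm_scale X (-1)).
    replace (Rabs (-1)) with 1 by (unfold Rabs; destruct (Rcase_abs (-1)); lra).
    replace (2 / (INR n + 1)) with (/ (INR n + 1) + / (INR n + 1)).
    lra. field. pose proof (pos_INR n); lra. }
  apply small_zero in Hy; [|apply vnorm_nonneg].
  apply vnorm_eq0 in Hy.
  transitivity (y +v r). unfold y; vring.
  replace y with y'. unfold y'; vring.
  transitivity ((y +v (-1) *v y') +v y'). rewrite Hy; vring. vring.
Qed.

End Enc.

Section Card.

Lemma cl_refl A : card_le A A.
Proof. exists (fun a => a); auto. Qed.

Lemma cl_trans A B C : card_le A B -> card_le B C -> card_le A C.
Proof. intros [f Hf] [g Hg]. exists (fun a => g (f a)); auto. Qed.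

Lemma cl_prod A A' B B' : card_le A A' -> card_le B B' -> card_le (A * B) (A' * B').
Proof.
  intros [f Hf] [g Hg]. exists (fun p => (f (fst p), g (snd p))).
  intros [a b] [a' b'] E. injection E as E1 E2. f_equal; auto.
Qed.

Lemma cl_arrow C A B : card_le A B -> card_le (C -> A) (C -> B).
Proof.
  intros [f Hf]. exists (fun h c => f (h c)). intros h h' E.
  apply functional_extensionality; intro c. apply Hf. exact (equal_f E c).
Qed.

Lemma cl_pow A B : card_le A B -> card_le (A -> bool) (B -> bool).
Proof.
  intros [f Hf].
  exists (fun h b => match excluded_middle_informative (exists a, f a = b) with
            | left H => h (proj1_sig (constructive_indefinite_description _ H))
            | right _ => false end).
  intros h h' E. apply functional_extensionality; intro a.
  pose proof (equal_f E (f a)) as Ea. simpl in Ea.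
  destruct (excluded_middle_informative (exists a0, f a0 = f a)) as [H|H].
  - destruct (constructive_indefinite_description _ H) as [a0 Ha0]. simpl in Ea.
    apply Hf in Ha0. subst; auto.
  - exfalso; apply H; eauto.
Qed.

Lemma cl_sumpow A B : card_le ((A -> bool) * (B -> bool)) ((A + B) -> bool).
Proof.
  exists (fun p e => match e with inl a => fst p a | inr b => snd p b end).
  intros [h1 h2] [h1' h2'] E. f_equal; apply functional_extensionality; intro x.
  exact (equal_f E (inl x)). exact (equal_f E (inr x)).
Qed.

Lemma cl_curry C A : card_le (C -> (A -> bool)) ((C * A) -> bool).
Proof.
  exists (fun h p => h (fst p) (snd p)). intros h h' E.
  apply functional_extensionality; intro c; apply functional_extensionality; intro a.
  exact (equal_f E (c, a)).
Qed.

Lemma cl_self A : card_le A (A -> bool).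
Proof.
  exists (fun a b => if excluded_middle_informative (a = b) then true else false).
  intros a a' E. pose proof (equal_f E a') as E'. simpl in E'.
  destruct (excluded_middle_informative (a = a')); auto.
  destruct (excluded_middle_informative (a' = a')) as [_|n']; [discriminate|].
  exfalso; auto.
Qed.

Lemma nth_error_inj {A} (l l' : list A) : (forall n, nth_error l n = nth_error l' n) -> l = l'.
Proof.
  revert l'; induction l as [|a t IH]; intros [|a' t'] H; auto.
  - specialize (H 0%nat); discriminate.
  - specialize (H 0%nat); discriminate.
  - pose proof (H 0%nat) as H0; simpl in H0; injection H0 as ->. f_equal. apply IH.
    intro n; exact (H (S n)).
Qed.

Lemma cl_list A : card_le (list A) (nat -> option A).
Proof.
  exists (fun l n => nth_error l n). intros l l' E. apply nth_error_inj. intro n; exact (equal_f E n).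
Qed.

Lemma cl_option A C : card_le A (C -> bool) -> card_le (option A) ((unit + C) -> bool).
Proof.
  intros [f Hf].
  exists (fun o e => match o with None => false | Some a => match e with inl _ => true | inr c => f a c end end).
  intros [a|] [a'|] E; auto.
  - f_equal. apply Hf. apply functional_extensionality; intro c. exact (equal_f E (inr c)).
  - pose proof (equal_f E (inl tt)); discriminate.
  - pose proof (equal_f E (inl tt)); discriminate.
Qed.

Lemma Z_dense (r r' : R) : r < r' -> exists c : Z * nat, r < IZR (fst c) / INR (S (snd c)) < r'.
Proof.
  intro H. destruct (archimed_cor1 (r' - r)) as [N [HN HN0]]. lra.
  assert (HN1 : 0 < INR N) by (apply lt_0_INR; auto).
  destruct (archimed (r * INR N)) as [A1 A2].
  exists (up (r * INR N), pred N). cbn [fst snd].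
  replace (INR (S (pred N))) with (INR N) by (f_equal; lia).
  assert (1 < (r' - r) * INR N).
  { apply (Rmult_lt_compat_r (INR N)) in HN; auto. rewrite Rinv_l in HN; lra. }
  split.
  - apply (Rmult_lt_reg_r (INR N)); auto.
    replace (IZR (up (r * INR N)) / INR N * INR N) with (IZR (up (r * INR N))) by (field; lra). lra.
  - apply (Rmult_lt_reg_r (INR N)); auto.
    replace (IZR (up (r * INR N)) / INR N * INR N) with (IZR (up (r * INR N))) by (field; lra). lra.
Qed.

Lemma cl_R : card_le R ((Z * nat) -> bool).
Proof.
  exists (fun r c => if Rlt_dec (IZR (fst c) / INR (S (snd c))) r then true else false).
  intros r r' E. destruct (Rtotal_order r r') as [H|[H|H]]; auto; exfalso.
  - destruct (Z_dense r r' H) as [c Hc]. pose proof (equal_f E c) as Ec. cbv beta in Ec.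
    destruct (Rlt_dec _ r) as [h1|h1]; destruct (Rlt_dec _ r') as [h2|h2]; try discriminate;
    try apply Rnot_lt_le in h1; try apply Rnot_lt_le in h2; lra.
  - destruct (Z_dense r' r H) as [c Hc]. pose proof (equal_f E c) as Ec. cbv beta in Ec.
    destruct (Rlt_dec _ r) as [h1|h1]; destruct (Rlt_dec _ r') as [h2|h2]; try discriminate;
    try apply Rnot_lt_le in h1; try apply Rnot_lt_le in h2; lra.
Qed.

End Card.

From Stdlib Require Cantor.

Lemma to_nat_inj (p q : nat * nat) : Cantor.to_nat p = Cantor.to_nat q -> p = q.
Proof. intro E. rewrite <- (Cantor.cancel_of_to p), <- (Cantor.cancel_of_to q), E. reflexivity. Qed.

Section KN.
Variable K : Type.

Fixpoint find_idx (l : list K) (k : K) : nat :=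
  match l with
  | nil => O
  | a :: t => if excluded_middle_informative (a = k) then O else S (find_idx t k)
  end.

Lemma find_idx_inj l k k' : In k l -> In k' l -> find_idx l k = find_idx l k' -> k = k'.
Proof.
  induction l as [|a t IH]; simpl; intros H1 H2 E. contradiction.
  destruct (excluded_middle_informative (a = k)) as [e1|n1];
  destruct (excluded_middle_informative (a = k')) as [e2|n2]; try discriminate.
  - congruence.
  - injection E as E. apply IH; auto. destruct H1; [contradiction|auto]. destruct H2; [contradiction|auto].
Qed.

Fixpoint lst (P : K -> Prop) (n : nat) : list K :=
  match n with
  | O => nil
  | S n' => match excluded_middle_informative (exists k, P k /\ ~ In k (lst P n')) with
            | left H => proj1_sig (constructive_indefinite_description _ H) :: lst P n'
            | right _ => lst P n'
            end
  end.

Lemma dedekind (P : K -> Prop) :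
  (~ exists s : nat -> K, (forall n, P (s n)) /\ (forall m n, s m = s n -> m = n)) ->
  exists idx : K -> nat, forall k k', P k -> P k' -> idx k = idx k' -> k = k'.
Proof.
  intro Hno.
  destruct (classic (forall n, exists k, P k /\ ~ In k (lst P n))) as [Hall|Hsome].
  - exfalso. apply Hno.
    set (s := fun n => match lst P (S n) with nil => proj1_sig (constructive_indefinite_description _ (Hall n)) | a :: _ => a end).
    assert (Hs : forall n, lst P (S n) = s n :: lst P n /\ P (s n) /\ ~ In (s n) (lst P n)).
    { intro n. unfold s. simpl.
      destruct (excluded_middle_informative (exists k, P k /\ ~ In k (lst P n))) as [H|H].
      - destruct (constructive_indefinite_description _ H) as [k [Pk Nk]]. simpl. auto.
      - exfalso; apply H; auto. }
    assert (Hin : forall m n, (m < n)%nat -> In (s m) (lst P n)).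
    { intros m n Hmn. induction n. lia.
      destruct (Hs n) as [E _]. rewrite E. destruct (Nat.eq_dec m n) as [->|ne].
      left; auto. right; apply IHn; lia. }
    exists s. split. intro n; apply (Hs n).
    intros m n E. destruct (Nat.lt_total m n) as [H|[H|H]]; auto; exfalso.
    + apply (proj2 (proj2 (Hs n))). rewrite <- E. apply Hin; auto.
    + apply (proj2 (proj2 (Hs m))). rewrite E. apply Hin; auto.
  - apply not_all_ex_not in Hsome. destruct Hsome as [n0 Hn0].
    assert (Hcov : forall k, P k -> In k (lst P n0)).
    { intros k Pk. apply NNPP; intro Hk. apply Hn0. exists k; auto. }
    exists (find_idx (lst P n0)). intros k k' Pk Pk' E. apply (find_idx_inj (lst P n0)); auto.
Qed.

Lemma KxN : card_le nat K -> card_le (K * nat) K.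
Proof.
  intros [eN HeN].
  set (okq := fun q : (K -> Prop) * (K -> nat -> K) =>
    (forall k n, fst q k -> fst q (snd q k n)) /\
    (forall k n k' n', fst q k -> fst q k' -> snd q k n = snd q k' n' -> k = k' /\ n = n')).
  set (T := {q | okq q}).
  assert (ok0 : okq ((fun _ => False), (fun k n => k))) by (split; simpl; intros; contradiction).
  set (t0 := exist okq _ ok0 : T).
  set (Rl := fun a b : T => (forall k, fst (proj1_sig a) k -> fst (proj1_sig b) k) /\
                    (forall k n, fst (proj1_sig a) k -> snd (proj1_sig b) k n = snd (proj1_sig a) k n)).
  destruct (ZW.zorn_pre T t0 Rl) as [t Ht].
  - intro a; split; auto.
  - intros a b c [H1 H2] [H3 H4]; split; auto.
    intros k n Hk. rewrite H4, H2; auto.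
  - intros C Hch.
    set (ch := fun k => epsilon (inhabits t0) (fun a : T => C a /\ fst (proj1_sig a) k)).
    set (As := fun k => exists a, C a /\ fst (proj1_sig a) k).
    set (gs := fun k n => snd (proj1_sig (ch k)) k n).
    assert (Kh : forall b k n, C b -> fst (proj1_sig b) k -> gs k n = snd (proj1_sig b) k n).
    { intros b k n Hb Hk. unfold gs.
      destruct (epsilon_spec (inhabits t0) (fun a : T => C a /\ fst (proj1_sig a) k) (ex_intro _ b (conj Hb Hk))) as [Ha Hak].
      fold (ch k) in Ha, Hak.
      destruct (Hch _ _ Ha Hb) as [[_ E]|[_ E]]; rewrite E; auto. }
    assert (oks : okq (As, gs)).
    { split; simpl.
      - intros k n [c [Hc Hk]]. exists c; split; auto. rewrite (Kh c); auto. apply (proj2_sig c); auto.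
      - intros k n k' n' [a [Ha Hk]] [b [Hb Hk']] E.
        rewrite (Kh a) in E; auto. rewrite (Kh b) in E; auto.
        destruct (Hch _ _ Ha Hb) as [[S1 E1]|[S1 E1]].
        + rewrite <- E1 in E; auto. apply (proj2 (proj2_sig b)); auto.
        + rewrite <- E1 in E by auto. apply (proj2 (proj2_sig a)); auto. }
    exists (exist okq (As, gs) oks). intros s Hs. split; simpl.
    + intros k Hk; exists s; auto.
    + intros k n Hk. apply Kh; auto.
  - destruct t as [[A g] [Cl Inj]]. simpl in Cl, Inj.
    assert (NoSeq : ~ exists s : nat -> K, (forall n, ~ A (s n)) /\ (forall m n, s m = s n -> m = n)).
    { intros [s [Ps Is]].
      set (inv := fun k => epsilon (inhabits O) (fun m => s m = k)).
      assert (Hinv : forall m, s (inv (s m)) = s m).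
      { intro m. apply (epsilon_spec (inhabits O) (fun m' => s m' = s m)). eauto. }
      set (A' := fun k => A k \/ exists m, k = s m).
      set (g' := fun k n => if excluded_middle_informative (A k) then g k n else s (Cantor.to_nat (inv k, n))).
      assert (ok' : okq (A', g')).
      { split; simpl.
        - intros k n Hk. unfold g', A'. destruct (excluded_middle_informative (A k)).
          left; auto. right; eauto.
        - intros k n k' n' Hk Hk' E. unfold g' in E.
          destruct (excluded_middle_informative (A k)) as [a1|a1];
          destruct (excluded_middle_informative (A k')) as [a2|a2].
          + apply Inj; auto.
          + exfalso. apply (Ps (Cantor.to_nat (inv k', n'))). rewrite <- E. apply Cl; auto.
          + exfalso. apply (Ps (Cantor.to_nat (inv k, n))). rewrite E. apply Cl; auto.
          + destruct Hk as [|[m ->]]; [contradiction|]. destruct Hk' as [|[m' ->]]; [contradiction|].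
            apply Is, to_nat_inj in E. injection E as E1 E2. split; auto.
            rewrite <- Hinv, E1, Hinv. reflexivity. }
      destruct (Ht (exist okq (A', g') ok')) as [R1 _].
      - split; simpl. intros k Hk; left; auto.
        intros k n Hk. unfold g'. destruct (excluded_middle_informative (A k)); [auto|contradiction].
      - apply (Ps O). apply (R1 (s O)). right; eauto. }
    destruct (classic (exists a0, A a0)) as [[a0 Ha0]|Hne].
    2:{ exfalso. apply NoSeq. exists eN. split; auto. intros n Hn. apply Hne; eauto. }
    destruct (dedekind (fun k => ~ A k) NoSeq) as [idx Hidx].
    exists (fun p => if excluded_middle_informative (A (fst p)) then g (fst p) (2 * snd p)%nat
                     else g a0 (S (2 * Cantor.to_nat (idx (fst p), snd p)))).
    intros [k n] [k' n'] E. cbn [fst snd] in E.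
    destruct (excluded_middle_informative (A k)) as [a1|a1];
    destruct (excluded_middle_informative (A k')) as [a2|a2].
    + apply Inj in E; auto. destruct E as [-> E]. f_equal; lia.
    + apply Inj in E; auto. destruct E as [_ E]. lia.
    + apply Inj in E; auto. destruct E as [_ E]. lia.
    + apply Inj in E; auto. destruct E as [_ E].
      assert (E' : Cantor.to_nat (idx k, n) = Cantor.to_nat (idx k', n')) by lia.
      apply to_nat_inj in E'. injection E' as E1 E2. subst n'. f_equal. apply Hidx; auto.
Qed.

End KN.

Section Assemble.
Variable K : Type.
Hypothesis eN : card_le nat K.
Hypothesis eKN : card_le (K * nat) K.

Lemma cl_nat_K C : card_le C nat -> card_le C K.
Proof. intro H; eapply cl_trans; eauto. Qed.

Lemma cl_sumK A B : card_le A K -> card_le B K -> card_le (A + B) K.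
Proof.
  intros [f Hf] [g Hg]. eapply cl_trans; [|exact eKN].
  exists (fun e => match e with inl a => (f a, O) | inr b => (g b, 1%nat) end).
  intros [a|b] [a'|b'] E; injection E; intros; try discriminate; f_equal; auto.
Qed.

Lemma cl_prodKc A C : card_le A K -> card_le C nat -> card_le (A * C) K.
Proof. intros H1 H2. eapply cl_trans; [|exact eKN]. apply cl_prod; auto. Qed.

Lemma cl_prodcK A C : card_le C nat -> card_le A K -> card_le (C * A) K.
Proof.
  intros H1 H2. eapply cl_trans; [|apply (cl_prodKc A C H2 H1)].
  exists (fun p => (snd p, fst p)). intros [a b] [a' b'] E; injection E; intros; subst; auto.
Qed.

End Assemble.

Lemma cl_ZN : card_le (Z * nat) nat.
Proof.
  exists (fun p => Cantor.to_nat (Cantor.to_nat (Z.to_nat (fst p), Z.to_nat (- fst p)), snd p)).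
  intros [z n] [z' n'] E. cbn [fst snd] in E. apply to_nat_inj in E.
  pose proof (f_equal fst E) as E1. pose proof (f_equal snd E) as E2. cbn [fst snd] in E1, E2.
  apply to_nat_inj in E1.
  pose proof (f_equal fst E1) as E3. pose proof (f_equal snd E1) as E4. cbn [fst snd] in E3, E4.
  subst. f_equal. lia.
Qed.

Lemma cl_NN : card_le (nat * nat) nat.
Proof. exists Cantor.to_nat. apply to_nat_inj. Qed.

Lemma cl_unitN : card_le unit nat.
Proof. exists (fun _ => O). intros [] []; auto. Qed.

Theorem mainTheorem2 (X : BanachSpace) (hinf : infinite_dimensional X)
  (K : Type) (hK : biort_bound X K) :
  exists D : X -> Prop, dense D /\ card_le {x : X | D x} (K -> bool).
Proof.
  destruct (max_bio X) as [S [bS maxS]].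
  set (I := Ityp X S).
  assert (eI : card_le I K) by exact (hK _ _ _ (Ibiort X S bS)).
  pose proof (nat_into_K X hinf K hK) as eN.
  pose proof (KxN K eN) as eKN.
  set (U := (unit + ((Z * nat) + I))%type).
  set (St := ((I * (Z * nat)) + (nat * (nat * U)))%type).
  assert (eSt : card_le St K).
  { apply (cl_sumK K eKN).
    - apply (cl_prodKc K eKN); auto. apply cl_ZN.
    - apply (cl_prodcK K eKN). apply cl_refl.
      apply (cl_prodcK K eKN). apply cl_refl.
      apply (cl_sumK K eKN). apply (cl_nat_K K eN), cl_unitN.
      apply (cl_sumK K eKN); auto. apply (cl_nat_K K eN), cl_ZN. }
  assert (eX : card_le X (St -> bool)).
  { eapply cl_trans.
    { exists (Phi X S). apply (Phi_inj X S bS maxS). }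
    eapply cl_trans; [|apply cl_sumpow]. apply cl_prod.
    - eapply cl_trans; [apply cl_arrow, cl_R|apply cl_curry].
    - eapply cl_trans; [apply cl_arrow|apply cl_curry].
      eapply cl_trans; [apply cl_list|].
      eapply cl_trans; [apply cl_arrow|apply cl_curry].
      apply cl_option. eapply cl_trans; [|apply cl_sumpow].
      apply cl_prod. apply cl_R. apply cl_self. }
  exists (fun _ => True). split.
  - intros x eps Heps. exists x. split; auto. unfold vsub. rewrite vadd_opp, norm0. lra.
  - eapply cl_trans; [|apply cl_pow; exact eSt].
    eapply cl_trans; [|exact eX].
    exists (fun p => proj1_sig p). intros [a []] [b []] E. simpl in E. subst; auto.
Qed.
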